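(* Let $p\ge2$ and $n=p-1$. Let $L$ be a linear subspace of $\mathrm{Sym}(p)$ with $L\cap\mathrm{Sym}_+(p)\neq\emptyset$ and $\dim L\le T_p-T_1=T_p-1$. Then $L$ is $n$-estimable.
   Context: $\mathrm{Sym}(p)$ denotes real symmetric $p\times p$ matrices, $\mathrm{Sym}_+(p)$ its positive definite elements, $T_k=k(k+1)/2$. $L$ is $n$-estimable if there exist $x^1,\dots,x^n\in\mathbb R^p$ such that $K=0$ is the only $K\in L$ with $Kx^i=0$ for all $i=1,\dots,n$. *)

(* Defs.v *)
(* real closed field R (elementarily equivalent to the reals). *)
From HB Require Import structures.
From mathcomp Require Import all_boot all_order all_algebra.
Set Implicit Arguments. Unset Strict Implicit. Unset Printing Implicit Defensive.
Import Order.TTheory GRing.Theory Num.Theory.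
Local Open Scope ring_scope.

Definition T (k : nat) : nat := (k * k.+1)./2.

Definition sym_mx (R : rcfType) (p : nat) (K : 'M[R]_p) : Prop := K^T = K.

Definition posdef (R : rcfType) (p : nat) (K : 'M[R]_p) : Prop :=
  sym_mx K /\ forall x : 'cV[R]_p, x != 0 -> 0 < (x^T *m K *m x) ord0 ord0.

Definition subspace_of_Sym (R : rcfType) (p : nat) (L : {vspace 'M[R]_p}) : Prop :=
  forall K, K \in L -> sym_mx K.

Definition estimable (R : rcfType) (p n : nat) (L : {vspace 'M[R]_p}) : Prop :=
  exists x : 'I_n -> 'cV[R]_p,
    forall K, K \in L -> (forall i, K *m x i = 0) -> K = 0.

(* Main.v *)
Require Import Defs.
From HB Require Import structures.
From mathcomp Require Import all_boot all_order all_algebra.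
From mathcomp Require Import ring zify.
From Stdlib Require Import Classical_Prop.
Import Order.TTheory GRing.Theory Num.Theory.
Local Open Scope ring_scope.

Lemma T_bin m : T m = 'C(m.+1, 2).
Proof. by rewrite bin2 /T /= mulnC. Qed.

Lemma sum_le_min (n : nat) (j : nat) :
  (\sum_(i < n | (i <= j)%N) 1)%N = minn n j.+1.
Proof.
elim: n => [|n IH]; first by rewrite big_ord0.
rewrite big_mkcond /= big_ord_recr /= -big_mkcond /= IH.
case: leqP => H; lia.
Qed.

Lemma card_upper n :
  #|[pred t : 'I_n * 'I_n | (t.1 <= t.2)%N]| = T n.
Proof.
rewrite -sum1_card.
rewrite -(pair_big_dep xpredT (fun i j : 'I_n => (i <= j)%N) (fun _ _ => 1%N)) /=.
rewrite (exchange_big_dep xpredT) //=.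
under eq_bigr => j _ do rewrite sum_le_min.
rewrite T_bin -bin2_sum big_mkord big_ord_recl /= add0n.
apply: eq_bigr => j _.
rewrite /bump /=.
by have := ltn_ord j; lia.
Qed.
Section S.
Variable R : rcfType.
Variable n : nat.

Definition Smx (t : 'I_n * 'I_n) : 'M[R]_n :=
  delta_mx t.1 t.2 + delta_mx t.2 t.1.

Lemma Smx_entry (u t : 'I_n * 'I_n) : (u.1 <= u.2)%N -> (t.1 <= t.2)%N ->
  Smx u t.1 t.2 = (u == t)%:R * (1 + (t.1 == t.2)%:R).
Proof.
case: u t => [u1 u2] [t1 t2] /= H1 H2.
rewrite !mxE xpair_eqE.
rewrite -!(inj_eq val_inj) /=.
move: (val t1) (val t2) (val u1) (val u2) H1 H2 => a b c d H1 H2.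
case: (a =P c) => e1; case: (b =P d) => e2; case: (a =P d) => e3;
  case: (b =P c) => e4; case: (c =P a) => e5; case: (d =P b) => e6;
  case: (a =P b) => e7; rewrite /= ?mul0r ?mul1r ?addr0 ?add0r //; try lia.
Qed.

Definition Ps : pred ('I_n * 'I_n) := [pred t : 'I_n * 'I_n | (t.1 <= t.2)%N].
Definition Xs := [seq Smx t | t <- enum Ps].

Lemma Xs_free (t0 : 'I_n * 'I_n) : free Xs.
Proof.
suff : free (in_tuple Xs) by []. apply/freeP => k Hk i0.
have Hs : (i0 < size (enum Ps))%N by rewrite -(size_map Smx); exact: ltn_ord.
set t := (nth t0 (enum Ps) i0).
have Pt : (t.1 <= t.2)%N.
  by have := mem_nth t0 Hs; rewrite mem_enum.
have := congr1 (fun M : 'M[R]_n => M t.1 t.2) Hk.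
rewrite summxE /= mxE.
rewrite (bigD1 i0) //= big1 => [|i ni].
  rewrite addr0 mxE (nth_map t0) // Smx_entry // eqxx mul1r.
  move/eqP; rewrite mulf_eq0 => /orP [/eqP //|].
  by rewrite addrC natr1 pnatr_eq0.
have Hi : (i < size (enum Ps))%N by rewrite -(size_map Smx); exact: ltn_ord.
have Pi : ((nth t0 (enum Ps) i).1 <= (nth t0 (enum Ps) i).2)%N.
  by have := mem_nth t0 Hi; rewrite mem_enum.
rewrite mxE (nth_map t0) // Smx_entry //.
rewrite nth_uniq ?enum_uniq //.
by move: ni; rewrite -(inj_eq val_inj) /= => /negPf ->; rewrite !mul0r mulr0.
Qed.

Lemma size_Xs : size Xs = T n.
Proof. by rewrite size_map -cardE card_upper. Qed.
End S.

Lemma Smx_in (R : rcfType) (n : nat) (L : {vspace 'M[R]_n}) :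
  (forall w : 'cV[R]_n, w *m w^T \in L) -> forall t, Smx R n t \in L.
Proof.
move=> Hall [a b].
pose E (i : 'I_n) : 'cV[R]_n := delta_mx i ord0.
have -> : Smx R n (a, b) = (E a + E b) *m (E a + E b)^T - E a *m (E a)^T
           - E b *m (E b)^T.
  rewrite /E !linearD /= !mulmxDl !trmx_delta !mul_delta_mx /Smx /=.
  apply/matrixP => i j; rewrite !mxE; ring.
by rewrite !memvB.
Qed.

Theorem proposition5 (R : rcfType) (p : nat) (L : {vspace 'M[R]_p}) :
  (2 <= p)%N ->
  subspace_of_Sym L ->
  (exists K, K \in L /\ posdef K) ->
  (\dim L <= T p - T 1)%N ->
  estimable (p.-1) L.
Proof.
case: p L => [|q] L // _ Hsym _ Hdim.
case: (Classical_Prop.classic (exists w : 'cV[R]_q.+1, w *m w^T \notin L))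
  => [[w Hw] | Hn]; last first.
  have Hall : forall w : 'cV[R]_q.+1, w *m w^T \in L.
    by move=> w; apply/negPn/negP => H; apply: Hn; exists w.
  have Hsub : (<<Xs R q.+1>> <= L)%VS.
    by apply/span_subvP => M /mapP [t _ ->]; apply: Smx_in.
  have := dimvS Hsub.
  rewrite (eqP (@Xs_free R q.+1 (ord0, ord0))) size_Xs => H.
  have := leq_trans H Hdim.
  have : (0 < T q.+1)%N by rewrite T_bin bin_gt0.
  rewrite [T 1]/T /=. lia.
rewrite /estimable /=.
case: (boolP [exists i, w i ord0 != 0]) => [/existsP [a Ha] | Hc]; last first.
  exfalso; move/negP: Hw; apply.
  have -> : w = 0.
    apply/matrixP => i j; rewrite (ord1 j) mxE.
    by move: Hc; rewrite negb_exists => /forallP /(_ i) /negPn /eqP.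
  by rewrite mul0mx mem0v.
pose x (j : 'I_q) : 'cV[R]_q.+1 :=
  w a ord0 *: delta_mx (lift a j) ord0 - w (lift a j) ord0 *: delta_mx a ord0.
exists x => K HK Hx.
have Rel : forall i j, w a ord0 * K i j = w j ord0 * K i a.
  move=> i j; case: (unliftP a j) => [j' -> | ->]; last by rewrite mulrC.
  have := congr1 (fun M : 'cV[R]_q.+1 => M i ord0) (Hx j').
  rewrite /x mulmxBr -!scalemxAr -!colE !mxE => /eqP.
  by rewrite subr_eq0 => /eqP.
have Ks : forall i j, K i j = K j i.
  by move=> i j; rewrite -[in RHS](Hsym K HK) mxE.
set c := K a a / (w a ord0) ^+ 2.
have Kexpr : K = c *: (w *m w^T).
  apply/matrixP => i j; rewrite !mxE big_ord1 !mxE.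
  have e : (w a ord0) ^+ 2 * K i j = w j ord0 * w i ord0 * K a a.
    by rewrite expr2 -mulrA Rel mulrCA (Ks i a) Rel mulrA.
  apply: (mulfI (expf_neq0 2 Ha)); rewrite e /c; field.
  exact: Ha.
case: (eqVneq c 0) => [c0 | cn]; first by rewrite Kexpr c0 scale0r.
exfalso; move/negP: Hw; apply.
have -> : w *m w^T = c^-1 *: K by rewrite Kexpr scalerA mulVf // scale1r.
exact: memvZ.
Qed.
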